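(* Suppose $P(z)$ is invertible at some $z \in \mathbb{C}$ and consider $X, Y, W \in \mathbb{C}^{nd}$ block partitioned as $X=[X_0;\ldots;X_{d-1}]$ etc. with blocks in $\mathbb{C}^n$. Then: (1) The block components of $X = (z\mathcal{B} - \mathcal{A})^{-1} Y$ are given by $X_0 = P(z)^{-1}\left(- Y_{d-1} - A_d Y_{d-1} + \sum_{i=1}^d A_i \sum_{j=0}^{i-1} z^{i-1-j} Y_j\right)$, and $X_i = z X_{i-1} - Y_{i-1}$ for $i=1, 2, \ldots, d-1$. (2) The block components of $\tilde{X} = (z\mathcal{B} - \mathcal{A})^{-*} W$ are given by $\tilde{X}_{d-1} = -P(z)^{-*} \sum_{j=0}^{d-1} \bar{z}^j W_j$, $\tilde{X}_{d-2} = -W_{d-1} - \bar z A_d^* \tilde{X}_{d-1} - A_{d-1}^*\tilde{X}_{d-1}$, and $\tilde{X}_{i} = -W_{i+1} + \bar z \tilde{X}_{i+1} - A_{i+1}^* \tilde{X}_{d-1}$ for $i=0, 1, \ldots, d-3$.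
   Context: Let $A_0, \ldots, A_d \in \mathbb{C}^{n\times n}$ with $A_d\neq 0$, and $P(z) = \sum_{j=0}^d z^j A_j$. The first companion linearization is the pencil $\mathcal{A} - z\mathcal{B}\in\mathbb{C}^{nd\times nd}$, written in $d\times d$ blocks of size $n\times n$: $\mathcal{A}$ has identity blocks $I$ on the first block superdiagonal in its first $d-1$ block rows, zeros elsewhere in those rows, and last block row $[A_0, A_1, \ldots, A_{d-1}]$; $\mathcal{B} = \mathrm{diag}(I, \ldots, I, -A_d)$. $M^{-*}$ denotes $(M^* )^{-1}$ and $^*$ is conjugate transpose. *)

(* Defs.v *)
From HB Require Import structures.
From mathcomp Require Import all_boot all_order all_algebra.
Unset Printing Implicit Defensive.
Import Order.TTheory GRing.Theory Num.Theory.
Local Open Scope ring_scope.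

(* Complex scalars: any numClosedFieldType C (e.g. the complex numbers),
   with Num.conj the complex conjugation. *)

Definition ctmx (C : numClosedFieldType) (m p : nat) (M : 'M[C]_(m, p)) : 'M[C]_(p, m) :=
  (map_mx Num.conj M)^T.
Arguments ctmx {C m p} M.

Definition Peval (C : numClosedFieldType) (n d : nat) (A : nat -> 'M[C]_n) (z : C) : 'M[C]_n :=
  \sum_(j < d.+1) z ^+ j *: A j.
Arguments Peval {C n} d A z.

(* entry (i, j) of a square matrix, by nat indices (0 if out of range) *)
Definition ment (C : numClosedFieldType) (n : nat) (M : 'M[C]_n) (i j : nat) : C :=
  match insub i, insub j with Some a, Some b => M a b | _, _ => 0 end.
Arguments ment {C n} M i j.

(* Global index r of C^{nd} corresponds to block r %/ n, in-block entry r %% n. *)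

(* First companion matrix \mathcal{A}: identity blocks on the first block
   superdiagonal in block rows 0..d-2, last block row [A_0, ..., A_{d-1}]. *)
Definition compLinA (C : numClosedFieldType) (n d : nat) (A : nat -> 'M[C]_n) : 'M[C]_(d * n) :=
  \matrix_(r, c)
    let ri := (r %/ n)%N in let rk := (r %% n)%N in
    let ci := (c %/ n)%N in let ck := (c %% n)%N in
    if (ri < d.-1)%N then (if (ci == ri.+1) && (rk == ck) then 1 else 0)
    else ment (A ci) rk ck.
Arguments compLinA {C} n d A.

(* \mathcal{B} = diag(I, ..., I, -A_d) *)
Definition compLinB (C : numClosedFieldType) (n d : nat) (A : nat -> 'M[C]_n) : 'M[C]_(d * n) :=
  \matrix_(r, c)
    let ri := (r %/ n)%N in let rk := (r %% n)%N in
    let ci := (c %/ n)%N in let ck := (c %% n)%N in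
    if ri == ci then
      (if (ri < d.-1)%N then (if rk == ck then 1 else 0) else - ment (A d) rk ck)
    else 0.
Arguments compLinB {C} n d A.

(* i-th block (of size n) of a column vector: entries i*n .. i*n+n-1
   (zero outside the range, never used there). *)
Definition blk (C : numClosedFieldType) (n : nat) (m : nat) (X : 'cV[C]_m) (i : nat) : 'cV[C]_n :=
  \col_(k < n) oapp (fun r : 'I_m => X r 0) 0 (insub (i * n + k)%N).
Arguments blk {C} n {m} X i.

(* Main.v *)
Require Import Defs.
From HB Require Import structures.
From mathcomp Require Import all_boot all_order all_algebra.
From mathcomp Require Import zify.
Import Order.TTheory GRing.Theory Num.Theory.
Set Implicit Arguments.
Unset Strict Implicit.
Local Open Scope ring_scope.
Lemma ordp_proof (d n : nat) (j : 'I_d) (l : 'I_n) : (j * n + l < d * n)%N.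
Proof. have := ltn_ord j; have := ltn_ord l. nia. Qed.

Definition ordp (d n : nat) (j : 'I_d) (l : 'I_n) : 'I_(d * n) := Ordinal (ordp_proof j l).

Lemma npos_of (d n : nat) (c : 'I_(d * n)) : (0 < n)%N.
Proof. case: n c => // c; have := ltn_ord c; move: (nat_of_ord c); by rewrite muln0. Qed.

Lemma ltn_divb (d n : nat) (c : 'I_(d * n)) : (c %/ n < d)%N.
Proof. by rewrite ltn_divLR ?(npos_of c) // mulnC. Qed.

Lemma ltn_modb (d n : nat) (c : 'I_(d * n)) : (c %% n < n)%N.
Proof. by rewrite ltn_pmod ?(npos_of c). Qed.

Lemma sum_blocks (C : numClosedFieldType) (d n : nat) (F : 'I_(d * n) -> C) :
  \sum_(c < d * n) F c = \sum_(j < d) \sum_(l < n) F (ordp j l).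
Proof.
rewrite pair_bigA /=.
rewrite (reindex (fun p : 'I_d * 'I_n => ordp p.1 p.2)) /=; first by apply: eq_bigr => -[].
exists (fun c => (Ordinal (ltn_divb c), Ordinal (ltn_modb c))).
- move=> [j l] _ /=.
  have np : (0 < n)%N by apply: leq_ltn_trans (ltn_ord l).
  congr pair; apply: val_inj => /=.
    by rewrite divnMDl // divn_small // addn0.
  by rewrite modnMDl modn_small.
- move=> c _; apply: val_inj => /=; by rewrite -divn_eq.
Qed.

Lemma blk_ordp (C : numClosedFieldType) (d n : nat) (X : 'cV[C]_(d * n)) (j : 'I_d) (l : 'I_n) :
  blk n X j l 0 = X (ordp j l) 0.
Proof. by rewrite mxE (_ : (j * n + l)%N = val (ordp j l)) // valK. Qed.

Definition mblk (C : numClosedFieldType) (n d : nat) (M : 'M[C]_(d * n)) (i j : nat) : 'M[C]_n :=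
  \matrix_(k, l) ment M (i * n + k) (j * n + l).

Lemma mblk_ordp (C : numClosedFieldType) (d n : nat) (M : 'M[C]_(d * n)) (i j : 'I_d) (k l : 'I_n) :
  mblk M i j k l = M (ordp i k) (ordp j l).
Proof.
rewrite mxE /ment (_ : (i * n + k)%N = val (ordp i k)) // (_ : (j * n + l)%N = val (ordp j l)) //.
by rewrite !valK.
Qed.

Lemma blk_mul (C : numClosedFieldType) (d n : nat) (M : 'M[C]_(d * n)) (X : 'cV[C]_(d * n)) (i : 'I_d) :
  blk n (M *m X) i = \sum_(j < d) mblk M i j *m blk n X j.
Proof.
apply/colP => k; rewrite blk_ordp mxE sum_blocks summxE; apply: eq_bigr => j _.
rewrite mxE; apply: eq_bigr => l _; by rewrite mblk_ordp blk_ordp.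
Qed.

Lemma blk0_eq0 (C : numClosedFieldType) (d n : nat) (X : 'cV[C]_(d * n)) :
  (forall i : 'I_d, blk n X i = 0) -> X = 0.
Proof.
move=> H; apply/colP => c; rewrite mxE.
have := H (Ordinal (ltn_divb c)) => /colP /(_ (Ordinal (ltn_modb c))).
rewrite blk_ordp mxE => <-; congr (X _ _); apply: val_inj => /=; by rewrite -divn_eq.
Qed.
Definition Mz (C : numClosedFieldType) (n d' : nat) (A : nat -> 'M[C]_n) (z : C) :=
  z *: compLinB n d'.+1 A - compLinA n d'.+1 A.

Lemma divmod_ordp (d n : nat) (i : 'I_d) (k : 'I_n) :
  ((i * n + k) %/ n = i)%N /\ ((i * n + k) %% n = k)%N.
Proof.
have np : (0 < n)%N by apply: leq_ltn_trans (ltn_ord k).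
by rewrite divnMDl // divn_small // addn0 modnMDl modn_small.
Qed.

Lemma mentE (C : numClosedFieldType) (n : nat) (M : 'M[C]_n) (k l : 'I_n) :
  ment M k l = M k l.
Proof. by rewrite /ment !valK. Qed.

Lemma mblkM1 (C : numClosedFieldType) (n d' : nat) (A : nat -> 'M[C]_n) (z : C) (i j : 'I_d'.+1) :
  (i < d')%N ->
  mblk (Mz d' A z) i j = (j == i :> nat)%:R *: z%:M - (j == i.+1 :> nat)%:R *: 1%:M.
Proof.
move=> hi; apply/matrixP => k l; rewrite mblk_ordp !mxE /=.
have [-> ->] := divmod_ordp i k; have [-> ->] := divmod_ordp j l.
rewrite hi /=.
rewrite (eq_sym (i : nat)).
have [<-|kl] := eqVneq k l; last first.
  have kl' : (k == l :> nat) = false by apply/negbTE.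
  by rewrite kl' andbF /= if_same !mulr0 subr0.
rewrite !(eqxx (k : nat)) andbT.
by case: (j == i :> nat); case: (j == i.+1 :> nat);
  rewrite /= ?mulr0 ?mul0r ?mulr1 ?mul1r ?subr0 ?sub0r.
Qed.

Lemma mblkM2 (C : numClosedFieldType) (n d' : nat) (A : nat -> 'M[C]_n) (z : C) (j : 'I_d'.+1) :
  mblk (Mz d' A z) d' j = - ((j == d' :> nat)%:R *: (z *: A d'.+1)) - A j.
Proof.
apply/matrixP => k l; rewrite (mblk_ordp _ ord_max) !mxE /=.
have [-> ->] := divmod_ordp (@ord_max d') k; have [-> ->] := divmod_ordp j l.
rewrite ltnn /= !mentE (eq_sym d').
by case: (j == d' :> nat); rewrite /= ?mulr0 ?mul0r ?mulr1 ?mul1r ?subr0 ?sub0r ?oppr0 ?mulrN ?sub0r.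
Qed.

Lemma ctmxE (C : numClosedFieldType) (m p : nat) (M : 'M[C]_(m, p)) k l : ctmx M k l = Num.conj (M l k).
Proof. by rewrite !mxE. Qed.

Lemma ctmxB (C : numClosedFieldType) (m p : nat) (M N : 'M[C]_(m, p)) : ctmx (M - N) = ctmx M - ctmx N.
Proof. by apply/matrixP => k l; rewrite !(ctmxE, mxE) rmorphB. Qed.

Lemma ctmxN (C : numClosedFieldType) (m p : nat) (M : 'M[C]_(m, p)) : ctmx (- M) = - ctmx M.
Proof. by apply/matrixP => k l; rewrite !(ctmxE, mxE) rmorphN. Qed.

Lemma ctmxZ (C : numClosedFieldType) (m p : nat) (a : C) (M : 'M[C]_(m, p)) : ctmx (a *: M) = Num.conj a *: ctmx M.
Proof. by apply/matrixP => k l; rewrite !(ctmxE, mxE) rmorphM. Qed.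

Lemma ctmx_scalar (C : numClosedFieldType) (m : nat) (a : C) : ctmx (a%:M : 'M[C]_m) = (Num.conj a)%:M.
Proof. by apply/matrixP => k l; rewrite !(ctmxE, mxE) rmorphMn eq_sym. Qed.

Lemma ctmx_sum (C : numClosedFieldType) (m p q : nat) (F : 'I_q -> 'M[C]_(m, p)) :
  ctmx (\sum_(i < q) F i) = \sum_(i < q) ctmx (F i).
Proof. by apply/matrixP => k l; rewrite ctmxE !summxE rmorph_sum; apply: eq_bigr => i _; rewrite ctmxE. Qed.

Lemma mblk_ct (C : numClosedFieldType) (d n : nat) (M : 'M[C]_(d * n)) (i j : 'I_d) :
  mblk (ctmx M) i j = ctmx (mblk M j i).
Proof. by apply/matrixP => k l; rewrite mblk_ordp !ctmxE mblk_ordp. Qed.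

Lemma blk_ctmul (C : numClosedFieldType) (d n : nat) (M : 'M[C]_(d * n)) (X : 'cV[C]_(d * n)) (i : 'I_d) :
  blk n (ctmx M *m X) i = \sum_(j < d) ctmx (mblk M j i) *m blk n X j.
Proof. by rewrite blk_mul; apply: eq_bigr => j _; rewrite mblk_ct. Qed.

Lemma sum_delta (C : numClosedFieldType) (p q m i : nat) (G : nat -> 'M[C]_(p, q)) :
  \sum_(j < m) (j == i :> nat)%:R *: G j = if (i < m)%N then G i else 0.
Proof.
case: ltnP => h.
  rewrite (bigD1 (Ordinal h)) //= eqxx scale1r big1 ?addr0 // => j ne.
  rewrite (_ : (j == i :> nat) = false) ?scale0r //; apply/negbTE.
  by apply: contra ne => /eqP e; apply/eqP/val_inj.
apply: big1 => j _; rewrite ltn_eqF ?scale0r //; exact: leq_trans (ltn_ord j) h.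
Qed.

Lemma sum_delta_S (C : numClosedFieldType) (p q m j : nat) (G : nat -> 'M[C]_(p, q)) :
  \sum_(i < m) (j == i.+1 :> nat)%:R *: G i = if (0 < j)%N then (if (j.-1 < m)%N then G j.-1 else 0) else 0.
Proof.
case: j => [|j] /=; first by apply: big1 => i _; rewrite scale0r.
rewrite -sum_delta; apply: eq_bigr => i _; by rewrite eqSS eq_sym.
Qed.

Lemma eq1 (C : numClosedFieldType) (n d' : nat) (A : nat -> 'M[C]_n) (z : C) (X : 'cV[C]_(d'.+1 * n)) i :
  (i < d')%N -> blk n (Mz d' A z *m X) i = z *: blk n X i - blk n X i.+1.
Proof.
move=> hi; have hi' : (i < d'.+1)%N by apply: ltnW.
have := blk_mul (Mz d' A z) X (Ordinal hi'); rewrite /= => ->.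
rewrite (eq_bigr (fun j : 'I_d'.+1 => (j == i :> nat)%:R *: (z *: blk n X j) - (j == i.+1 :> nat)%:R *: blk n X j)).
  by rewrite sumrB (sum_delta _ _ (fun j => z *: blk n X j)) sum_delta hi' ltnS hi.
move=> j _; rewrite (@mblkM1 _ _ _ A z (Ordinal hi') j hi) mulmxBl -!scalemxAl !mul_scalar_mx ?scale1r ?mul1mx //.
Qed.

Lemma eq2 (C : numClosedFieldType) (n d' : nat) (A : nat -> 'M[C]_n) (z : C) (X : 'cV[C]_(d'.+1 * n)) :
  blk n (Mz d' A z *m X) d' = - (z *: (A d'.+1 *m blk n X d')) - \sum_(j < d'.+1) A j *m blk n X j.
Proof.
have := blk_mul (Mz d' A z) X ord_max; rewrite /= => ->.
rewrite (eq_bigr (fun j : 'I_d'.+1 => - ((j == d' :> nat)%:R *: (z *: (A d'.+1 *m blk n X j))) - A j *m blk n X j)).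
  by rewrite sumrB sumrN (sum_delta _ _ (fun j => z *: (A d'.+1 *m blk n X j))) ltnSn.
move=> j _; by rewrite mblkM2 mulmxBl mulNmx -!scalemxAl.
Qed.

Lemma eq3 (C : numClosedFieldType) (n d' : nat) (A : nat -> 'M[C]_n) (z : C) (X : 'cV[C]_(d'.+1 * n)) j :
  (j < d'.+1)%N -> blk n (ctmx (Mz d' A z) *m X) j =
    (if (j < d')%N then Num.conj z *: blk n X j else 0)
    - (if (0 < j)%N then blk n X j.-1 else 0)
    - (j == d' :> nat)%:R *: (Num.conj z *: (ctmx (A d'.+1) *m blk n X d'))
    - ctmx (A j) *m blk n X d'.
Proof.
move=> hj; have := blk_ctmul (Mz d' A z) X (Ordinal hj); rewrite /= => ->.
rewrite big_ord_recr /=.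
rewrite (eq_bigr (fun i : 'I_d' => (i == j :> nat)%:R *: (Num.conj z *: blk n X i) - (j == i.+1 :> nat)%:R *: blk n X i)); last first.
  move=> i _; rewrite (@mblkM1 _ _ _ A z (widen_ord (leqnSn d') i) (Ordinal hj) (ltn_ord i)).
  rewrite ctmxB !ctmxZ ctmx_scalar !rmorph_nat mulmxBl -!scalemxAl mul_scalar_mx.
  rewrite (_ : ctmx 1%:M = 1%:M); last by rewrite -[in RHS](rmorph1 (@Num.conj C)) -ctmx_scalar.
  rewrite !mul_scalar_mx ?scale1r (eq_sym (i : nat)) //.
rewrite sumrB (sum_delta _ _ (fun i => Num.conj z *: blk n X i)) sum_delta_S.
rewrite (@mblkM2 _ _ _ A z (Ordinal hj)) ctmxB ctmxN !ctmxZ rmorph_nat mulmxBl mulNmx -!scalemxAl.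
case: j hj => [|j] hj /=; first by rewrite !addrA.
have hj' : (j < d')%N by []. by rewrite hj' !addrA.
Qed.
Definition Ssum (C : numClosedFieldType) (n m : nat) (z : C) (Y : 'cV[C]_m) (i : nat) : 'cV[C]_n :=
  \sum_(0 <= j < i) z ^+ (i.-1 - j) *: blk n Y j.

Lemma Ssum0 (C : numClosedFieldType) (n m : nat) (z : C) (Y : 'cV[C]_m) : Ssum n z Y 0 = 0.
Proof. by rewrite /Ssum big_geq. Qed.

Lemma SsumS (C : numClosedFieldType) (n m : nat) (z : C) (Y : 'cV[C]_m) i :
  Ssum n z Y i.+1 = z *: Ssum n z Y i + blk n Y i.
Proof.
rewrite /Ssum big_nat_recr //= subnn expr0 scale1r; congr (_ + _).
rewrite scaler_sumr !big_nat; apply: eq_bigr => j /andP [_ hj].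
rewrite scalerA -exprS; congr (_ ^+ _ *: _); lia.
Qed.

Lemma zl1 (V : zmodType) (a b c d e : V) : a + b + (c + (d - e)) = a + c - e + (b + d).
Proof. rewrite -!addrA; congr (_ + _); rewrite [LHS]addrCA; congr (_ + _); by rewrite [LHS]addrA [LHS]addrC. Qed.

Lemma part1 (C : numClosedFieldType) (n d' : nat) (A : nat -> 'M[C]_n) (z : C)
  (X Y : 'cV[C]_(d'.+1 * n)) : Mz d' A z *m X = Y ->
  Peval d'.+1 A z *m blk n X 0 =
     - blk n Y d' - A d'.+1 *m blk n Y d'
      + \sum_(1 <= i < d'.+2) A i *m Ssum n z Y i
  /\ (forall i : nat, (1 <= i < d'.+1)%N -> blk n X i = z *: blk n X i.-1 - blk n Y i.-1).
Proof.
move=> hXY.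
have rec : forall i : nat, (i < d')%N -> blk n X i.+1 = z *: blk n X i - blk n Y i.
  by move=> i hi; rewrite -hXY eq1 // opprB addrCA subrr addr0.
split; last first.
  by case=> [|i] // /andP [_ hi]; rewrite rec.
have pw : forall i : nat, (i < d'.+1)%N -> z ^+ i *: blk n X 0 = blk n X i + Ssum n z Y i.
  elim=> [|i IH] hi; first by rewrite expr0 scale1r Ssum0 addr0.
  rewrite exprS -scalerA IH ?(ltnW hi) // rec // SsumS scalerDr.
  by rewrite addrACA addNr addr0.
have hlast := eq2 A z X; rewrite hXY in hlast.
rewrite /Peval mulmx_suml big_ord_recr /=.
rewrite (eq_bigr (fun i : 'I_d'.+1 => A i *m blk n X i + A i *m Ssum n z Y i)); last first.
  by move=> i _; rewrite -scalemxAl scalemxAr pw // mulmxDr.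
rewrite big_split /= -scalemxAl scalemxAr exprS -scalerA pw // scalerDr.
rewrite (_ : z *: Ssum n z Y d' = Ssum n z Y d'.+1 - blk n Y d'); last by rewrite SsumS addrK.
rewrite (_ : \sum_(1 <= i < d'.+2) A i *m Ssum n z Y i = \sum_(i < d'.+2) A i *m Ssum n z Y i); last first.
  by rewrite big_ord_recl Ssum0 mulmx0 add0r big_add1 big_mkord.
rewrite [\sum_(i < d'.+2) _]big_ord_recr /=.
rewrite mulmxDr mulmxBr -scalemxAr [X in _ = - X - _ + _]hlast opprB opprK.
exact: zl1.
Qed.

Lemma zl2 (V : zmodType) (x a b : V) : x = - (0 - x - a - b) - a - b.
Proof. by rewrite sub0r !opprD !opprK [x + a + b - a]addrAC !addrK. Qed.
Lemma zl3 (V : zmodType) (x c v : V) : x = - (c - x - v) + c - v.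
Proof. by rewrite !opprD !opprK [- c + x + v + c]addrAC addrK addrAC addNr add0r. Qed.

Lemma part2 (C : numClosedFieldType) (n d' : nat) (A : nat -> 'M[C]_n) (z : C)
  (X W : 'cV[C]_(d'.+1 * n)) : ctmx (Mz d' A z) *m X = W ->
  ctmx (Peval d'.+1 A z) *m blk n X d' = - \sum_(0 <= j < d'.+1) (Num.conj z) ^+ j *: blk n W j
  /\ ((2 <= d'.+1)%N -> blk n X d'.-1 =
         - blk n W d' - Num.conj z *: (ctmx (A d'.+1) *m blk n X d')
         - ctmx (A d') *m blk n X d')
  /\ (forall i : nat, (i + 3 <= d'.+1)%N -> blk n X i =
         - blk n W i.+1 + Num.conj z *: blk n X i.+1 - ctmx (A i.+1) *m blk n X d').
Proof.
move=> hXW; split; last split.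
- rewrite big_mkord.
  rewrite (eq_bigr (fun j : 'I_d'.+1 => (Num.conj z) ^+ j *: 
    (if (j < d')%N then Num.conj z *: blk n X j else 0)
    - (Num.conj z) ^+ j *: (if (0 < j)%N then blk n X j.-1 else 0)
    - (Num.conj z) ^+ j *: ((j == d' :> nat)%:R *: (Num.conj z *: (ctmx (A d'.+1) *m blk n X d')))
    - (Num.conj z) ^+ j *: (ctmx (A j) *m blk n X d'))); last by move=> j _; rewrite -hXW eq3 // !scalerBr.
  rewrite !sumrB.
  have -> : \sum_(j < d'.+1) (Num.conj z) ^+ j *: (if (j < d')%N then Num.conj z *: blk n X j else 0)
     = \sum_(j < d'.+1) (Num.conj z) ^+ j *: (if (0 < j)%N then blk n X j.-1 else 0).
    rewrite big_ord_recr big_ord_recl /= ltnn scaler0 addr0 scaler0 add0r.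
    by apply eq_bigr => i _; rewrite ltn_ord scalerA -exprSr /bump /= add1n add0n.
  rewrite subrr.
  rewrite (eq_bigr (fun j : 'I_d'.+1 => (j == d' :> nat)%:R *: ((Num.conj z) ^+ j *: (Num.conj z *: (ctmx (A d'.+1) *m blk n X d'))))); last first.
    by move=> j _; rewrite scalerA mulrC -scalerA.
  rewrite (sum_delta _ _ (fun j => (Num.conj z) ^+ j *: (Num.conj z *: (ctmx (A d'.+1) *m blk n X d')))) ltnSn.
  rewrite /Peval ctmx_sum big_ord_recr /= mulmxDl mulmx_suml ctmxZ rmorphXn -scalemxAl scalerA -exprSr.
  rewrite sub0r opprD opprK addrC; congr (_ + _).
  by rewrite opprK; apply: eq_bigr => j _; rewrite ctmxZ rmorphXn -scalemxAl.
- move=> h2; have := eq3 A z X (ltnSn d'); rewrite hXW ltnn eqxx scale1r.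
  case: d' X W hXW h2 => [|d'] // X W hXW h2 /= ->.
  exact: zl2.
- move=> i hi; have hj : (i.+1 < d'.+1)%N by lia.
  have := eq3 A z X hj; rewrite hXW /=.
  have -> : (i.+1 < d')%N by lia.
  have -> : (i.+1 == d') = false by apply/negbTE; lia.
  rewrite scale0r subr0 => ->.
  exact: zl3.
Qed.

Lemma unit_of_ker (C : numClosedFieldType) (m : nat) (M : 'M[C]_m) :
  (forall v : 'cV[C]_m, M *m v = 0 -> v = 0) -> M \in unitmx.
Proof.
move=> H; rewrite -unitmx_tr -row_free_unit -kermx_eq0; apply/eqP/row_matrixP => i; rewrite row0.
have h : row i (kermx M^T) *m M^T = 0 by rewrite -row_mul mulmx_ker row0.
apply: trmx_inj; rewrite trmx0; apply: H.
by rewrite -[M in M *m _]trmxK -trmx_mul h trmx0.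
Qed.

Lemma blk_zero (C : numClosedFieldType) (n m : nat) i : blk n (0 : 'cV[C]_m) i = 0.
Proof. apply/colP => k; rewrite !mxE; by case: insub => //= r; rewrite mxE. Qed.

Lemma Mz_unit (C : numClosedFieldType) (n d' : nat) (A : nat -> 'M[C]_n) (z : C) :
  Peval d'.+1 A z \in unitmx -> Mz d' A z \in unitmx.
Proof.
move=> hP; apply: unit_of_ker => v hv.
have [h1 h2] := part1 hv.
have S0 : forall i, Ssum n z (0 : 'cV[C]_(d'.+1 * n)) i = 0.
  by move=> i; apply: big1 => j _; rewrite blk_zero scaler0.
rewrite blk_zero mulmx0 subr0 oppr0 add0r in h1.
rewrite (eq_bigr (fun _ => 0)) ?big1 // in h1; last by move=> i _; rewrite S0 mulmx0.
have b0 : blk n v 0 = 0 by rewrite -[blk n v 0](mulKmx hP) h1 mulmx0.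
have bi : forall i, (i < d'.+1)%N -> blk n v i = 0.
  elim=> [|i IH] hi //; rewrite h2 /=; last by rewrite hi.
  by rewrite IH ?(ltnW hi) // blk_zero scaler0 subr0.
apply: blk0_eq0 => i; exact: bi.
Qed.

Lemma ctmx_unit (C : numClosedFieldType) (m : nat) (M : 'M[C]_m) : M \in unitmx -> ctmx M \in unitmx.
Proof. by move=> hM; rewrite /ctmx unitmx_tr map_unitmx. Qed.

Unset Implicit Arguments.
Set Strict Implicit.

Theorem theorem2p2 (C : numClosedFieldType) (n d : nat) (A : nat -> 'M[C]_n)
  (hd : (0 < d)%N) (hAd : A d != 0) (z : C)
  (hP : Peval d A z \in unitmx) (Y W : 'cV[C]_(d * n)) :
  (let X := invmx (z *: compLinB n d A - compLinA n d A) *m Y in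
   blk n X 0 = invmx (Peval d A z) *m
     (- blk n Y d.-1 - A d *m blk n Y d.-1
      + \sum_(1 <= i < d.+1) A i *m (\sum_(0 <= j < i) z ^+ (i.-1 - j) *: blk n Y j))
   /\ (forall i : nat, (1 <= i < d)%N -> blk n X i = z *: blk n X i.-1 - blk n Y i.-1))
  /\
  (let Xt := invmx (ctmx (z *: compLinB n d A - compLinA n d A)) *m W in
   blk n Xt d.-1 = - (invmx (ctmx (Peval d A z)) *m
                      \sum_(0 <= j < d) (Num.conj z) ^+ j *: blk n W j)
   /\ ((2 <= d)%N -> blk n Xt d.-2 =
         - blk n W d.-1 - Num.conj z *: (ctmx (A d) *m blk n Xt d.-1)
         - ctmx (A d.-1) *m blk n Xt d.-1)
   /\ (forall i : nat, (i + 3 <= d)%N -> blk n Xt i =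
         - blk n W i.+1 + Num.conj z *: blk n Xt i.+1 - ctmx (A i.+1) *m blk n Xt d.-1)).
Proof.
destruct d as [|d']; first by [].
change (z *: compLinB n d'.+1 A - compLinA n d'.+1 A) with (Mz d' A z).
have hM := Mz_unit hP.
split.
- move=> X.
  have hXY : Mz d' A z *m X = Y by rewrite /X mulKVmx.
  have [h1 h2] := part1 hXY.
  split; last exact: h2.
  by rewrite -[blk n X 0](mulKmx hP) h1.
- move=> Xt.
  have hXW : ctmx (Mz d' A z) *m Xt = W by rewrite /Xt mulKVmx // ctmx_unit.
  have [g1 [g2 g3]] := part2 hXW.
  split; last split.
  + by rewrite -[blk n Xt _](mulKmx (ctmx_unit hP)) g1 mulmxN.
  + exact: g2.
  + exact: g3.
Qed.
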